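(* Let $A$ be a finite non-cyclic abelian group. Then $\Delta_D(A)^*$ is disconnected if and only if $A\cong\mathfrak{G}\times\mathfrak{K}$, where $\mathfrak{G}$ is a cyclic group and $\mathfrak{K}$ is an elementary abelian $p$-group for some prime $p$.
   Context: The deep commuting graph $\Delta_D(G)$ has vertex set $G$, distinct vertices adjacent iff their preimages commute in a Schur cover $\tilde G$ of $G$ (a central extension $\{e\}\to M(G)\to\tilde G\to G\to\{e\}$ with kernel contained in $Z(\tilde G)\cap[\tilde G,\tilde G]$, of maximal order; $M(G)$ the Schur multiplier). A vertex is dominant if adjacent to every other vertex; the reduced graph $\Gamma^*$ is the subgraph induced by the non-dominant vertices. An elementary abelian $p$-group is one whose non-identity elements all have order $p$. *)

(* Defs.v *)
From HB Require Import structures.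
From mathcomp Require Import all_boot all_fingroup all_solvable.
Set Implicit Arguments. Unset Strict Implicit. Unset Printing Implicit Defensive.
Local Open Scope group_scope.

Definition stem_ext (aT gT : finGroupType) (A : {set aT}) (H : {group gT})
    (f : {morphism H >-> aT}) : Prop :=
  f @* H = A /\ 'ker f \subset 'Z(H) :&: H^`(1).

Definition schur_cover (aT gT : finGroupType) (A : {set aT}) (H : {group gT})
    (f : {morphism H >-> aT}) : Prop :=
  stem_ext A f /\
  forall (gT' : finGroupType) (H' : {group gT'}) (f' : {morphism H' >-> aT}),
    stem_ext A f' -> #|H'| <= #|H|.

Definition deep_adj (aT gT : finGroupType) (A : {set aT}) (H : {group gT})
    (f : {morphism H >-> aT}) (x y : aT) : bool :=
  [&& x \in A, y \in A, x != y &
   [forall x' in H, forall y' in H,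
      (f x' == x) ==> (f y' == y) ==> (x' * y' == y' * x')]].

Definition dominant (aT gT : finGroupType) (A : {set aT}) (H : {group gT})
    (f : {morphism H >-> aT}) (x : aT) : bool :=
  (x \in A) && [forall y in A, (y != x) ==> deep_adj A f x y].

Definition nondominant (aT gT : finGroupType) (A : {set aT}) (H : {group gT})
    (f : {morphism H >-> aT}) (x : aT) : bool :=
  (x \in A) && ~~ dominant A f x.

(* edge relation of the reduced graph Δ_D(A)^* (induced on non-dominant vertices) *)
Definition reduced_adj (aT gT : finGroupType) (A : {set aT}) (H : {group gT})
    (f : {morphism H >-> aT}) : rel aT :=
  fun x y => [&& nondominant A f x, nondominant A f y & deep_adj A f x y].

Definition reduced_disconnected (aT gT : finGroupType) (A : {set aT})
    (H : {group gT}) (f : {morphism H >-> aT}) : Prop :=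
  exists u v, [/\ nondominant A f u, nondominant A f v &
                  ~~ connect (reduced_adj A f) u v].

(* Main.v *)
Require Import Defs.
From HB Require Import structures.
From mathcomp Require Import all_boot all_fingroup all_solvable.
Set Implicit Arguments. Unset Strict Implicit. Unset Printing Implicit Defensive.
Local Open Scope group_scope.

Section Kun.
Variables (gT qT : finGroupType) (E : {group gT}) (Q : {group qT}) (c : gT -> qT) (m : nat).

Definition kun_ok := [/\ {in E &, {morph c : a b / a * b}}, {in E, forall e, c e \in Q},
  abelian Q & {in E, forall e, c e ^+ m.+1 = 1}].

Inductive kunT (ok : kun_ok) : predArgType :=
  Kun (u : 'I_m.+1 * gT * qT) of (u.1.2 \in E) && (u.2 \in Q).

Variable ok : kun_ok.
Definition kval (u : kunT ok) := let: Kun v _ := u in v.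

HB.instance Definition _ := [isSub for kval].
#[hnf] HB.instance Definition _ := [Finite of kunT ok by <:].

Definition addI (a b : 'I_m.+1) : 'I_m.+1 := inord ((a + b) %% m.+1).
Definition oppI (a : 'I_m.+1) : 'I_m.+1 := inord ((m.+1 - a) %% m.+1).
Lemma val_addI a b : (addI a b : nat) = (a + b) %% m.+1.
Proof. by rewrite /addI inordK // ltn_pmod. Qed.
Lemma val_oppI a : (oppI a : nat) = (m.+1 - a) %% m.+1.
Proof. by rewrite /oppI inordK // ltn_pmod. Qed.

Let cM : {in E &, {morph c : a b / a * b}}. Proof. by case: ok. Qed.
Let cQ : {in E, forall e, c e \in Q}. Proof. by case: ok. Qed.
Let cQQ : abelian Q. Proof. by case: ok. Qed.
Let cX : {in E, forall e, c e ^+ m.+1 = 1}. Proof. by case: ok. Qed.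

Lemma c1 : c 1 = 1.
Proof. have h := cM (group1 E) (group1 E); rewrite mulg1 in h.
by apply: (mulgI (c 1)); rewrite mulg1 -h. Qed.

Lemma cXmod e k : e \in E -> c e ^+ (k %% m.+1) = c e ^+ k.
Proof. by move=> Ee; rewrite expg_mod // cX. Qed.

Lemma kun_mem (u : kunT ok) : (kval u).1.2 \in E /\ (kval u).2 \in Q.
Proof. by case: u => v /= /andP. Qed.

Definition kmul_val (u v : 'I_m.+1 * gT * qT) : 'I_m.+1 * gT * qT :=
  (addI u.1.1 v.1.1, u.1.2 * v.1.2, u.2 * v.2 * c u.1.2 ^+ v.1.1).

Lemma kmul_proof (u v : kunT ok) :
  let w := kmul_val (kval u) (kval v) in (w.1.2 \in E) && (w.2 \in Q).
Proof.
case: (kun_mem u) (kun_mem v) => Eu Qu [Ev Qv] /=.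
by rewrite !groupM // groupX // cQ.
Qed.
Definition kmul u v : kunT ok := @Kun ok _ (kmul_proof u v).

Lemma kone_proof : let w := (ord0 : 'I_m.+1, 1 : gT, 1 : qT) in (w.1.2 \in E) && (w.2 \in Q).
Proof. by rewrite /= !group1. Qed.
Definition kone : kunT ok := @Kun ok _ kone_proof.

Definition kinv_val (u : 'I_m.+1 * gT * qT) : 'I_m.+1 * gT * qT :=
  (oppI u.1.1, u.1.2^-1, u.2^-1 * c u.1.2 ^+ u.1.1).

Lemma kinv_proof (u : kunT ok) :
  let w := kinv_val (kval u) in (w.1.2 \in E) && (w.2 \in Q).
Proof.
case: (kun_mem u) => Eu Qu /=.
by rewrite groupV Eu /= groupM ?groupV // groupX // cQ.
Qed.
Definition kinv u : kunT ok := @Kun ok _ (kinv_proof u).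

Lemma qcomm a b : a \in Q -> b \in Q -> commute a b.
Proof. by move=> Qa Qb; apply: (centsP cQQ). Qed.

Lemma kmul1g : left_id kone kmul.
Proof.
move=> u; apply: val_inj; case: u => [[[a e] q] /= /andP[Ee Qq]].
rewrite /kmul_val /= c1 expg1n !mul1g mulg1; congr (_, _, _).
by apply: ord_inj; rewrite val_addI add0n modn_small.
Qed.

Lemma kmulVg : left_inverse kone kinv kmul.
Proof.
move=> u; apply: val_inj; case: u => [[[a e] q] /= /andP[Ee Qq]].
rewrite /kmul_val /kinv_val /=; congr (_, _, _).
- apply: ord_inj; rewrite val_addI val_oppI /= modnDml subnK ?modnn //.
  exact: ltnW.
- by rewrite mulVg.
have EV : e^-1 \in E by rewrite groupV.
have ceV : c e^-1 = (c e)^-1.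
  apply: (mulgI (c e)); rewrite mulgV -cM // mulgV c1 //.
rewrite ceV expVgn -(mulgA _ _ q) (qcomm (groupX a (cQ Ee)) Qq).
by rewrite mulgA mulVg mul1g mulgV.
Qed.

Lemma kmulgA : associative kmul.
Proof.
move=> u v w; apply: val_inj.
case: u => [[[a e] q] /= /andP[Ee Qq]]; case: v => [[[a' e'] q'] /= /andP[Ee' Qq']].
case: w => [[[a'' e''] q''] /= /andP[Ee'' Qq'']].
rewrite /kmul_val /=; congr (_, _, _).
- by apply: ord_inj; rewrite !val_addI modnDml modnDmr addnA.
- by rewrite mulgA.
rewrite val_addI cXmod // expgD cM // expgMn; last exact: qcomm (cQ Ee) (cQ Ee').
have QX := groupX a' (cQ Ee); have QY := groupX a'' (cQ Ee).
have QZ := groupX a'' (cQ Ee').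
rewrite -!mulgA; congr (q * (q' * _)).
rewrite [RHS]mulgA (qcomm QX Qq'') -mulgA; congr (q'' * _).
by rewrite (qcomm QZ (groupM QX QY)) -mulgA.
Qed.

HB.instance Definition _ := Finite_isGroup.Build (kunT ok) kmulgA kmul1g kmulVg.

End Kun.

Section CE.
Variables (gT aT : finGroupType) (P : {group gT}) (g : {morphism P >-> aT}).
Hypotheses (cA : abelian (g @* P)) (kZ : 'ker g \subset 'Z(P)).

Lemma ce_comm_ker h k : h \in P -> k \in P -> [~ h, k] \in 'ker g.
Proof.
move=> Ph Pk; apply/kerP; first exact: groupR.
rewrite morphR //; apply/eqP/commgP.
by apply: (centsP cA); apply: mem_morphim.
Qed.

Lemma ce_central z h : z \in 'ker g -> h \in P -> commute z h.
Proof.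
move=> Kz Ph; have /setIP[_ cPz] := subsetP kZ z Kz.
exact: (centP cPz) h Ph.
Qed.

Lemma ce_commMr h k1 k2 : h \in P -> k1 \in P -> k2 \in P ->
  [~ h, k1 * k2] = [~ h, k1] * [~ h, k2].
Proof.
move=> Ph Pk1 Pk2; rewrite commgMJ.
have /conjg_fixP-> : [~ [~ h, k1], k2] == 1.
  by apply/commgP/ce_central=> //; apply: ce_comm_ker.
by apply/ce_central=> //; [apply: ce_comm_ker | apply: groupR].
Qed.

Lemma ce_commMl h1 h2 k : h1 \in P -> h2 \in P -> k \in P ->
  [~ h1 * h2, k] = [~ h1, k] * [~ h2, k].
Proof.
move=> Ph1 Ph2 Pk; rewrite commMgJ.
have /conjg_fixP-> // : [~ [~ h1, k], h2] == 1.
by apply/commgP/ce_central=> //; apply: ce_comm_ker.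
Qed.

Lemma ce_commXl h k n : h \in P -> k \in P -> [~ h ^+ n, k] = [~ h, k] ^+ n.
Proof.
move=> Ph Pk; elim: n => [|n IH]; first by rewrite !expg0 comm1g.
by rewrite !expgS ce_commMl ?groupX // IH.
Qed.

Lemma ce_commXr h k n : h \in P -> k \in P -> [~ h, k ^+ n] = [~ h, k] ^+ n.
Proof.
move=> Ph Pk; elim: n => [|n IH]; first by rewrite !expg0 commg1.
by rewrite !expgS ce_commMr ?groupX // IH.
Qed.

Lemma ce_comm_eq h h' k k' : h \in P -> h' \in P -> k \in P -> k' \in P ->
  g h = g h' -> g k = g k' -> [~ h, k] = [~ h', k'].
Proof.
move=> Ph Ph' Pk Pk' ghh gkk.
have Kh : h^-1 * h' \in 'ker g.
  by apply/kerP; rewrite ?groupM ?groupV // morphM ?groupV // morphV // ghh mulVg.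
have Kz : k^-1 * k' \in 'ker g.
  by apply/kerP; rewrite ?groupM ?groupV // morphM ?groupV // morphV // gkk mulVg.
have Pz1 : h^-1 * h' \in P by rewrite groupM ?groupV.
have Pz2 : k^-1 * k' \in P by rewrite groupM ?groupV.
set z1 := h^-1 * h' in Kh Pz1; set z2 := k^-1 * k' in Kz Pz2.
have -> : h' = h * z1 by rewrite /z1 mulKVg.
have -> : k' = k * z2 by rewrite /z2 mulKVg.
rewrite (ce_commMl Ph Pz1 (groupM Pk Pz2)) (ce_commMr Ph Pk Pz2).
have c1 : commute z1 (k * z2) := ce_central Kh (groupM Pk Pz2).
rewrite (eqP (introT commgP c1)).
rewrite -(invgR z2 h).
have c2 : commute z2 h := ce_central Kz Ph.
rewrite (eqP (introT commgP c2)).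
by rewrite invg1 !mulg1.
Qed.

End CE.

Definition pw (T : finGroupType) (n : nat) (B : {set T}) := [set y ^+ n | y in B].

Lemma pw_groupset (T : finGroupType) n (B : {group T}) : abelian B -> group_set (pw n B).
Proof.
move=> cB; apply/group_setP; split.
  by apply/imsetP; exists 1; rewrite ?group1 ?expg1n.
move=> _ _ /imsetP[y By ->] /imsetP[z Bz ->]; apply/imsetP; exists (y * z).
  exact: groupM.
by rewrite expgMn //; apply: (centsP cB).
Qed.

Lemma pw_sub (T : finGroupType) n (B : {group T}) : pw n B \subset B.
Proof. by apply/subsetP=> _ /imsetP[y By ->]; apply: groupX. Qed.

Section Step.
Variables (gT aT : finGroupType) (P : {group gT}) (g : {morphism P >-> aT}).
Variables (x : aT) (B : {group aT}) (xt : gT).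
Hypotheses (cA : abelian (g @* P)) (kZ : 'ker g \subset 'Z(P)).
Hypotheses (defA : <[x]> \x B = g @* P) (Pxt : xt \in P) (gxt : g xt = x).

Let ce_commMr0 := ce_commMr cA kZ.
Let ce_commMl0 := ce_commMl cA kZ.
Let ce_commXl0 := ce_commXl cA kZ.
Let ce_commXr0 := ce_commXr cA kZ.
Let ce_central0 := ce_central kZ.
Let ce_comm_ker0 := ce_comm_ker cA.

Lemma sBA : B \subset g @* P.
Proof. by have [_ <- _ _] := dprodP defA; apply: mulG_subr. Qed.

Lemma sPsP : g @*^-1 B \subset P.
Proof. exact: subsetIl. Qed.

Lemma psiM : {in g @*^-1 B &, {morph (fun h => [~ xt, h]) : a b / a * b}}.
Proof.
move=> a b Pa Pb /=; apply: ce_commMr0 => //; exact: (subsetP sPsP).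
Qed.

Canonical psi := Morphism psiM.

Lemma psiE h : psi h = [~ xt, h]. Proof. by []. Qed.

Lemma psi_ker (cB : abelian B) :
  g @*^-1 (pw #[x] B) \subset 'ker psi.
Proof.
apply/subsetP=> h /morphpreP[Ph /imsetP[y By gh]].
have PsB : h \in g @*^-1 B.
  by apply: mem_morphpre => //; rewrite gh groupX.
apply/kerP => //; rewrite psiE.
have /morphimP[h0 Ph0 _ gh0] := subsetP sBA y By.
have -> : [~ xt, h] = [~ xt, h0 ^+ #[x]].
  by apply: (ce_comm_eq cA kZ); rewrite ?groupX // morphX // -gh0.
rewrite ce_commXr0 // -ce_commXl0 //.
have Kx : xt ^+ #[x] \in 'ker g.
  by apply/kerP; rewrite ?groupX // morphX // gxt expg_order.
by apply/eqP/commgP/ce_central0.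
Qed.

Lemma psi_central h : h \in g @*^-1 B -> psi h \in 'ker g.
Proof. by move=> /morphpreP[Ph _]; rewrite psiE; apply: ce_comm_ker0. Qed.

Lemma der1_step : P^`(1) \subset psi @* (g @*^-1 B) <*> (g @*^-1 B)^`(1).
Proof.
set J := (_ <*> _).
have Jpsi : forall h, h \in g @*^-1 B -> [~ xt, h] \in J.
  by move=> h Hh; apply: (subsetP (joing_subl _ _)); rewrite -psiE mem_morphim.
have decomp : forall h, h \in P -> exists a, exists2 hb, hb \in g @*^-1 B & g h = g (xt ^+ a * hb).
  move=> h Ph; have : g h \in <[x]> * B.
    by have [_ -> _ _] := dprodP defA; apply: mem_morphim.
  case/mulsgP=> y b /cycleP[a ->] Bb ->.
  have /morphimP[hb Phb _ ghb] := subsetP sBA b Bb.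
  exists a, hb; first by apply: mem_morphpre => //; rewrite -ghb.
  by rewrite morphM ?groupX // morphX // gxt ghb.
rewrite derg1 gen_subG; apply/subsetP=> _ /imset2P[h k Ph Pk ->].
have [a [hb Hb gh]] := decomp h Ph; have [c [kb Kb gk]] := decomp k Pk.
have Phb : hb \in P by apply: (subsetP sPsP).
have Pkb : kb \in P by apply: (subsetP sPsP).
have Pxa : xt ^+ a \in P by apply: groupX.
have Pxc : xt ^+ c \in P by apply: groupX.
have -> : [~ h, k] = [~ xt ^+ a * hb, xt ^+ c * kb].
  by apply: (ce_comm_eq cA kZ); rewrite ?groupM.
rewrite (ce_commMl0 Pxa Phb (groupM Pxc Pkb)) (ce_commMr0 Pxa Pxc Pkb).
rewrite (ce_commMr0 Phb Pxc Pkb) (ce_commXl0 a Pxt Pxc) (ce_commXr0 c Pxt Pxt).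
rewrite commgg expg1n expg1n mul1g (ce_commXl0 a Pxt Pkb) (ce_commXr0 c Phb Pxt).
apply: groupM; first by apply: groupX; apply: Jpsi.
apply: groupM; last by apply: (subsetP (joing_subr _ _)); apply: mem_commg.
by rewrite -(invgR xt hb) groupX // groupV Jpsi.
Qed.

Lemma card_step : #|P^`(1)| <= #|psi @* (g @*^-1 B)| * #|(g @*^-1 B)^`(1)|.
Proof.
have sub := der1_step.
have cen : (g @*^-1 B)^`(1) \subset 'C(psi @* (g @*^-1 B)).
  apply/centsP=> v Dv u /morphimP[h _ Hh ->].
  apply: commute_sym; apply: ce_central0 => //; first exact: psi_central.
  by apply: (subsetP sPsP); apply: (subsetP (der_sub 1 _)).
rewrite cent_joinEr // in sub.
apply: leq_trans (subset_leq_card sub) _.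
by rewrite mul_cardG leq_pmulr ?cardG_gt0.
Qed.

Lemma card_psi_index : #|psi @* (g @*^-1 B)| = #|g @*^-1 B : 'ker psi|.
Proof. by rewrite card_morphim setIid. Qed.

End Step.

Definition bdp (T : finGroupType) (s : seq T) := \big[dprod/1]_(y <- s) <[y]>.

Fixpoint mu (T : finGroupType) (s : seq T) : nat :=
  if s is x :: s' then #|bdp s' : pw #[x] (bdp s')| * mu s' else 1.

Lemma mu_gt0 (T : finGroupType) (s : seq T) (B : {group T}) : bdp s = B -> 0 < mu s.
Proof.
elim: s B => //= x s IH B; rewrite /bdp big_cons -/(bdp s) => defB.
case/dprodP: defB => [[_ Bs _ defBs] _ _ _].
by rewrite muln_gt0 (IH Bs) // defBs indexg_gt0.
Qed.

Lemma ub (aT : finGroupType) (s : seq aT) :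
  forall (gT : finGroupType) (P : {group gT}) (g : {morphism P >-> aT}),
  bdp s = g @* P -> abelian (g @* P) -> 'ker g \subset 'Z(P) ->
  #|P^`(1)| <= mu s.
Proof.
elim: s => [|x s IH] gT P g defB cA kZ.
  have sPK : P \subset 'ker g.
    by rewrite -sub_morphim_pre // -defB /bdp big_nil.
  have cPP : abelian P.
    by apply: (subset_trans sPK); apply: (subset_trans kZ); apply: subsetIr.
  by move/derG1P: cPP => ->; rewrite cards1.
rewrite /bdp big_cons -/(bdp s) in defB.
have defB' := defB.
case/dprodP: defB' => [[_ Bs _ defBs] _ _ _].
rewrite defBs in defB.
have /morphimP[xt Pxt _ gxt] : x \in g @* P.
  have [_ <- _ _] := dprodP defB; exact: (subsetP (mulG_subl _ _)) _ (cycle_id x).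
move: gxt => /esym gxt.
have sBsA := sBA defB.
have cBs : abelian Bs := abelianS sBsA cA.
set Ps := g @*^-1 Bs.
have sPsP : Ps \subset P := subsetIl _ _.
pose g' := restrm sPsP g.
have defBs' : bdp s = g' @* Ps.
  by rewrite defBs restrmEsub // morphpreK.
have kZ' : 'ker g' \subset 'Z(Ps).
  rewrite ker_restrm; apply/subsetP=> h /setIP[Psh Kh].
  have /setIP[_ cPh] := subsetP kZ h Kh.
  by rewrite inE Psh; apply: subsetP (centS sPsP) h cPh.
have := IH _ _ g' defBs' _ kZ'; rewrite -defBs' defBs => /(_ cBs) IHs.
apply: leq_trans (card_step cA kZ defB Pxt gxt) _.
rewrite /= -/Ps defBs; apply: leq_mul => //.
rewrite card_psi_index; set PW := Group (pw_groupset #[x] cBs).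
have sub : g @*^-1 PW \subset 'ker (psi Bs cA kZ Pxt) := psi_ker cA kZ defB Pxt gxt cBs.
have -> : #|Bs : pw #[x] Bs| = #|Ps : g @*^-1 PW|.
  by rewrite index_morphpre // sBA.
apply: dvdn_leq; first exact: indexg_gt0.
exact: indexgS sub.
Qed.

Section LBStep.
Variables (aT gT : finGroupType) (B Bs : {group aT}) (x : aT) (E : {group gT}).
Variable (f : {morphism E >-> aT}).
Hypotheses (cB : abelian B) (defB : <[x]> \x Bs = B) (fE : f @* E = Bs).
Hypothesis (kf : 'ker f \subset 'Z(E) :&: E^`(1)).

Lemma sBsB : Bs \subset B.
Proof. by have [_ <- _ _] := dprodP defB; apply: mulG_subr. Qed.
Lemma sxB : x \in B.
Proof. by have [_ <- _ _] := dprodP defB; apply: (subsetP (mulG_subl _ _)); apply: cycle_id. Qed.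

Let cBs : abelian Bs := abelianS sBsB cB.
Let PW := Group (pw_groupset #[x] cBs).
Let m := #[x].-1.
Let mE : m.+1 = #[x]. Proof. by rewrite /m prednK. Qed.
Let xmod k : x ^+ (k %% m.+1) = x ^+ k.
Proof. by rewrite mE expg_mod_order. Qed.
Let c := fun e => coset PW (f e).
Let Q := (Bs / PW)%G.

Let nPW : Bs \subset 'N(PW).
Proof. by apply: sub_abelian_norm => //; apply: pw_sub. Qed.

Let fEB e : e \in E -> f e \in Bs.
Proof. by move=> Ee; rewrite -fE mem_morphim. Qed.

Lemma lb_ok : kun_ok E Q c m.
Proof.
split.
- move=> a b Ea Eb; rewrite /c morphM //.
  by apply: (morphM (coset_morphism PW)); apply: (subsetP nPW); apply: fEB.
- by move=> e Ee; apply: mem_quotient; apply: fEB.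
- exact: quotient_abelian.
move=> e Ee; rewrite /c mE -morphX; last by apply: (subsetP nPW); apply: fEB.
by apply: coset_id; apply/imsetP; exists (f e) => //; apply: fEB.
Qed.

Let K := kunT lb_ok.

Definition lbF (u : K) : aT := x ^+ (kval u).1.1 * f (kval u).1.2.

Lemma kvalM (u v : K) : kval (u * v) = kmul_val c (kval u) (kval v).
Proof. by []. Qed.

Lemma lbFM : {in [set: K] &, {morph lbF : u v / u * v}}.
Proof.
move=> u v _ _; rewrite /lbF kvalM /kmul_val /=.
have [Eu _] := kun_mem u; have [Ev _] := kun_mem v.
rewrite val_addI xmod expgD morphM // -!mulgA; congr (_ * _).
rewrite !mulgA; congr (_ * _).
apply: (centsP cB); first by apply: groupX; apply: sxB.
by apply: (subsetP sBsB); apply: fEB.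
Qed.

Canonical lbFm := Morphism lbFM.

Lemma lbF_ker (u : K) : (u \in 'ker lbFm) = (((kval u).1.1 == 0 :> nat)) && ((kval u).1.2 \in 'ker f).
Proof.
have [Eu _] := kun_mem u.
have Tu : u \in [set: K] := in_setT u.
apply/idP/andP => [/(kerP _ Tu) | [/eqP a0 ke]]; last first.
  by apply/(kerP _ Tu); rewrite /= /lbF a0 expg0 mul1g; apply/kerP.
rewrite /= /lbF => F1.
have [_ _ _ tiB] := dprodP defB.
have xa1 : x ^+ (kval u).1.1 = 1.
  have : x ^+ (kval u).1.1 \in <[x]> :&: Bs.
    by rewrite inE mem_cycle /= (canRL (mulgK _) F1) mul1g groupV fEB.
  by rewrite tiB => /set1P.
split; last first.
  by apply/kerP => //; move: F1; rewrite xa1 mul1g.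
move/eqP: xa1; rewrite -order_dvdn => /dvdn_leq.
by case: ((kval u).1.1) => a /= lta; case: a lta => // a; rewrite mE => lta /(_ isT); rewrite leqNgt lta.
Qed.

Lemma lbF_im : lbFm @* [set: K] = B.
Proof.
rewrite morphimEdom; apply/eqP; rewrite eqEsubset; apply/andP; split.
  apply/subsetP=> _ /imsetP[u _ ->]; rewrite /= /lbF.
  have [Eu _] := kun_mem u.
  by rewrite groupM ?groupX ?sxB //; apply: (subsetP sBsB); apply: fEB.
apply/subsetP=> y; have [_ <- _ _] := dprodP defB.
case/mulsgP=> _ b /cycleP[i ->] Bb ->.
have /morphimP[e Ee _ be] : b \in f @* E by rewrite fE.
have pf : let w := (inord (i %% m.+1) : 'I_m.+1, e, 1 : coset_of PW) in
  (w.1.2 \in E) && (w.2 \in Q) by rewrite /= Ee group1.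
apply/imsetP; exists (@Kun _ _ _ _ _ _ lb_ok _ pf) => //.
by rewrite /= /lbF /= inordK ?ltn_pmod // xmod be.
Qed.

Lemma c1' : c 1 = 1.
Proof. by rewrite /c !morph1. Qed.

Lemma cker k : k \in 'ker f -> c k = 1.
Proof. by move=> kk; rewrite /c (mker kk) morph1. Qed.

Lemma lbF_ker_card : #|'ker lbFm| = (#|'ker f| * #|Bs : PW|)%N.
Proof.
rewrite -card_quotient // -/Q -cardsX.
pose phi (u : K) := ((kval u).1.2, (kval u).2).
have inj : {in 'ker lbFm &, injective phi}.
  move=> u v; rewrite !lbF_ker => /andP[/eqP u0 _] /andP[/eqP v0 _] [e2 e3].
  apply: val_inj => /=; move: u0 v0 e2 e3.
  case: (kval u) => [[a e] q]; case: (kval v) => [[a' e'] q'] /= u0 v0 -> ->.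
  by congr (_, _, _); apply: ord_inj; rewrite u0 v0.
rewrite -(card_in_imset inj); apply: eq_card => -[e q].
apply/imsetP/setXP => [[u Ku [-> ->]] | [ke Qq]].
  by move: Ku; rewrite lbF_ker => /andP[_ ->]; have [_ ->] := kun_mem u.
have Ee : e \in E by apply: (subsetP (subsetIl _ _)) e ke.
have pf : let w := (ord0 : 'I_m.+1, e, q) in
  (w.1.2 \in E) && (w.2 \in Q) by rewrite /= Ee Qq.
by exists (@Kun _ _ _ _ _ _ lb_ok _ pf); rewrite // lbF_ker /=.
Qed.

Lemma lbF_ker_Z : 'ker lbFm \subset 'Z([set: K]).
Proof.
apply/subsetP=> u Ku; rewrite inE in_setT; apply/centP=> v _.
move: Ku; rewrite lbF_ker => /andP[/eqP a0 kk].
have /setIP[/setIP[Ek /centP cEk] _] := subsetP kf _ kk.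
have [Ev Qv] := kun_mem v; have [_ Qu] := kun_mem u.
apply: val_inj; rewrite /= /kmul_val (cker kk) expg1n mulg1 a0 expg0 mulg1.
congr (_, _, _).
- by apply: ord_inj; rewrite !val_addI a0 addn0.
- by rewrite (cEk _ Ev).
- by apply: (centsP (quotient_abelian PW cBs)).
Qed.

Lemma iota_proof (e : gT) :
  let w := (ord0 : 'I_m.+1, if e \in E then e else 1, 1 : coset_of PW) in
  (w.1.2 \in E) && (w.2 \in Q).
Proof. by rewrite /= group1 andbT; case: ifP. Qed.

Definition iota (e : gT) : K := @Kun _ _ _ _ _ _ lb_ok _ (iota_proof e).

Lemma iotaM : {in E &, {morph iota : a b / a * b}}.
Proof.
move=> a b Ea Eb; apply: val_inj; rewrite /= /kmul_val /= Ea Eb groupM //.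
rewrite expg0 !mulg1; congr (_, _, _).
by apply: ord_inj; rewrite val_addI.
Qed.

Canonical iotam := Morphism iotaM.

Definition one1 : 'I_m.+1 := inord (1 %% m.+1).

Lemma t_proof : let w := (one1, 1 : gT, 1 : coset_of PW) in (w.1.2 \in E) && (w.2 \in Q).
Proof. by rewrite /= !group1. Qed.

Definition tK : K := @Kun _ _ _ _ _ _ lb_ok _ t_proof.

Lemma w_proof (e : gT) : let w := (ord0 : 'I_m.+1, 1 : gT, c (if e \in E then e else 1)) in
  (w.1.2 \in E) && (w.2 \in Q).
Proof.
rewrite /= group1 /= /c; apply: (mem_quotient PW); apply: fEB; by case: ifP.
Qed.

Definition wK (e : gT) : K := @Kun _ _ _ _ _ _ lb_ok _ (w_proof e).

Lemma comm_iota_t e : e \in E -> [~ iota e, tK] = wK e.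
Proof.
move=> Ee.
have hab : iota e * tK = tK * iota e * wK e.
  apply: val_inj; rewrite /= /kmul_val /= Ee !mulg1 !mul1g.
  rewrite /one1 inordK ?ltn_pmod // (cXmod lb_ok 1 Ee) expg1; congr (_, _, _).
  by apply: ord_inj; rewrite !val_addI /one1 inordK ?ltn_pmod // !addn0 add0n !modn_mod.
by rewrite commgEl conjgE hab -mulgA mulKg mulKg.
Qed.

Lemma lbF_ker_der : 'ker lbFm \subset [set: K]^`(1).
Proof.
apply/subsetP=> u Ku; move: (Ku); rewrite lbF_ker => /andP[/eqP a0 kk].
have /setIP[/setIP[Ek _] Dk] := subsetP kf _ kk.
have [_ Qq] := kun_mem u.
case/morphimP: Qq => b Nb Bb qb.
have /morphimP[e Ee _ be] : b \in f @* E by rewrite fE.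
have -> : u = iota (kval u).1.2 * wK e.
  apply: val_inj; rewrite /= /kmul_val /= Ek Ee /c -be -qb !mulg1 mul1g.
  move: a0; case: (kval u) => [[a k] q] /= a0; congr (_, _, _).
  by apply: ord_inj; rewrite val_addI a0.
apply: groupM.
  have : iota (kval u).1.2 \in iotam @* E^`(1) by apply: mem_morphim.
  rewrite morphim_der //; apply: subsetP; apply: dergS; exact: subsetT.
by rewrite -comm_iota_t //; apply: mem_commg; apply: in_setT.
Qed.

End LBStep.


Lemma lb (aT : finGroupType) (s : seq aT) : forall B : {group aT}, bdp s = B -> abelian B ->
  exists gT : finGroupType, exists E : {group gT}, exists f : {morphism E >-> aT},
  [/\ f @* E = B, 'ker f \subset 'Z(E) :&: E^`(1) & #|'ker f| = mu s].
Proof.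
elim: s => [|x s IH] B defB cB.
  exists aT, 1%G, (idm 1); rewrite morphim1 ker_idm sub1G cards1.
  by split => //; rewrite -defB /bdp big_nil.
rewrite /bdp big_cons -/(bdp s) in defB.
have defB' := defB; case/dprodP: defB' => [[_ Bs _ defBs] _ _ _].
rewrite defBs in defB.
have cBs : abelian Bs := abelianS (sBsB defB) cB.
have [gT [E [f [fE kf cardk]]]] := IH Bs defBs cBs.
exists (kunT (lb_ok cB defB fE)), [set: kunT (lb_ok cB defB fE)]%G, (lbFm cB defB fE).
split.
- exact: lbF_im.
- by rewrite subsetI lbF_ker_Z //= lbF_ker_der.
- by rewrite lbF_ker_card //= cardk mulnC defBs.
Qed.

Lemma ub_pre (aT gT : finGroupType) (s : seq aT) (P : {group gT}) (g : {morphism P >-> aT})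
  (B : {group aT}) : bdp s = B -> B \subset g @* P -> abelian (g @* P) ->
  'ker g \subset 'Z(P) -> #|(g @*^-1 B)^`(1)| <= mu s.
Proof.
move=> defB sBA cA kZ.
have sPsP : g @*^-1 B \subset P := subsetIl _ _.
pose g' := restrm sPsP g.
have defBs' : bdp s = g' @* (g @*^-1 B) by rewrite defB restrmEsub // morphpreK.
have kZ' : 'ker g' \subset 'Z(g @*^-1 B).
  rewrite ker_restrm; apply/subsetP=> h /setIP[Psh Kh].
  have /setIP[_ cPh] := subsetP kZ h Kh.
  by rewrite inE Psh; apply: subsetP (centS sPsP) h cPh.
apply: (ub defBs' _ kZ'); rewrite -defBs' defB.
exact: abelianS sBA cA.
Qed.

Lemma card_ker_im (aT gT : finGroupType) (E : {group gT}) (f : {morphism E >-> aT}) :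
  #|E| = (#|'ker f| * #|f @* E|)%N.
Proof. by rewrite card_morphim setIid Lagrange // subsetIl. Qed.

Lemma key (aT gT : finGroupType) (A : {group aT}) (H : {group gT}) (f : {morphism H >-> aT})
  (x : aT) (B : {group aT}) :
  abelian A -> schur_cover A f -> <[x]> \x B = A ->
  forall xt h, xt \in H -> f xt = x -> h \in H -> f h \in B -> [~ xt, h] = 1 ->
  f h \in pw #[x] B.
Proof.
move=> cA [[fH kf] maxH] defA xt h Hxt fxt Hh fhB ch1.
have kZ : 'ker f \subset 'Z(H) by move: kf; rewrite subsetI => /andP[].
have cA' : abelian (f @* H) by rewrite fH.
have defA' : <[x]> \x B = f @* H by rewrite fH.
have sBA' := sBA defA'.
have cB : abelian B := abelianS sBA' cA'.
have [s defs _] := abelian_structure cB.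
have defxs : bdp (x :: s) = A by rewrite /bdp big_cons defs.
have [gT' [E [fE [fEE kE cardE]]]] := lb defxs cA.
have leEH := maxH gT' E fE (conj fEE kE).
rewrite (card_ker_im fE) (card_ker_im f) fEE fH leq_pmul2r ?cardG_gt0 // cardE in leEH.
have le1 : #|'ker f| <= #|H^`(1)|.
  by apply: subset_leq_card; move: kf; rewrite subsetI => /andP[].
have le2 := card_step cA' kZ defA' Hxt fxt.
have le3 := ub_pre defs sBA' cA' kZ.
set PW := Group (pw_groupset #[x] cB).
set Hs := f @*^-1 B.
have sub : f @*^-1 PW \subset 'ker (psi B cA' kZ Hxt) := psi_ker cA' kZ defA' Hxt fxt cB.
have le4 : #|B : PW| <= #|psi B cA' kZ Hxt @* Hs|.
  rewrite -(@leq_pmul2r (mu s)); last exact: (mu_gt0 defs).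
  have -> : (#|B : PW| * mu s = mu (x :: s))%N by rewrite /= /bdp defs.
  apply: leq_trans leEH _; apply: leq_trans le1 _.
  apply: leq_trans le2 _; exact: leq_mul.
rewrite card_psi_index -(index_morphpre _ sBA') in le4.
have sub2 : f @*^-1 PW \subset Hs by apply: morphpreS; apply: pw_sub.
have sub3 : 'ker (psi B cA' kZ Hxt) \subset Hs := subsetIl _ _.
have eqK : f @*^-1 PW = 'ker (psi B cA' kZ Hxt).
  apply/eqP; rewrite eqEcard sub /=.
  have := Lagrange sub2; rewrite -(Lagrange sub3) => eqL.
  rewrite -(@leq_pmul2r #|Hs : f @*^-1 PW|) ?indexg_gt0 // eqL leq_pmul2l ?cardG_gt0 //.
have : h \in 'ker (psi B cA' kZ Hxt).
  by apply/kerP; [apply: mem_morphpre | rewrite psiE].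
by rewrite -eqK => /morphpreP[].
Qed.

Section Graph.
Variables (aT gT : finGroupType) (A : {group aT}) (H : {group gT}) (f : {morphism H >-> aT}).
Hypotheses (cA : abelian A) (fH : f @* H = A) (kZ : 'ker f \subset 'Z(H)).

Let cA' : abelian (f @* H). Proof. by rewrite fH. Qed.

Definition pre (x : aT) : gT := odflt 1 [pick h | (h \in H) && (f h == x)].

Lemma preP x : x \in A -> pre x \in H /\ f (pre x) = x.
Proof.
move=> Ax; rewrite /pre; case: pickP => [h /andP[Hh /eqP <-] | none] //=.
move: Ax; rewrite -fH => /morphimP[h Hh _ fh].
by have := none h; rewrite Hh fh eqxx.
Qed.

Definition om x y := [~ pre x, pre y].

Lemma omE x y h k : h \in H -> k \in H -> f h = x -> f k = y -> om x y = [~ h, k].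
Proof.
move=> Hh Hk fh fk.
have Ax : x \in A by rewrite -fH -fh mem_morphim.
have Ay : y \in A by rewrite -fH -fk mem_morphim.
have [Hx fx] := preP Ax; have [Hy fy] := preP Ay.
by apply: (ce_comm_eq cA' kZ) => //; rewrite ?fx ?fy.
Qed.

Lemma omMl x1 x2 y : x1 \in A -> x2 \in A -> y \in A -> om (x1 * x2) y = om x1 y * om x2 y.
Proof.
move=> A1 A2 Ay; have [H1 f1] := preP A1; have [H2 f2] := preP A2; have [Hy fy] := preP Ay.
rewrite (@omE _ _ (pre x1 * pre x2) (pre y)) ?groupM ?morphM ?f1 ?f2 //.
by rewrite (ce_commMl cA' kZ).
Qed.

Lemma omMr x y1 y2 : x \in A -> y1 \in A -> y2 \in A -> om x (y1 * y2) = om x y1 * om x y2.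
Proof.
move=> Ax A1 A2; have [H1 f1] := preP A1; have [H2 f2] := preP A2; have [Hx fx] := preP Ax.
rewrite (@omE _ _ (pre x) (pre y1 * pre y2)) ?groupM ?morphM ?f1 ?f2 //.
by rewrite (ce_commMr cA' kZ).
Qed.

Lemma omXl x y n : x \in A -> y \in A -> om (x ^+ n) y = om x y ^+ n.
Proof.
move=> Ax Ay; have [Hx fx] := preP Ax; have [Hy fy] := preP Ay.
rewrite (@omE _ _ (pre x ^+ n) (pre y)) ?groupX ?morphX ?fx //.
by rewrite (ce_commXl cA' kZ).
Qed.

Lemma omXr x y n : x \in A -> y \in A -> om x (y ^+ n) = om x y ^+ n.
Proof.
move=> Ax Ay; have [Hx fx] := preP Ax; have [Hy fy] := preP Ay.
rewrite (@omE _ _ (pre x) (pre y ^+ n)) ?groupX ?morphX ?fy //.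
by rewrite (ce_commXr cA' kZ).
Qed.

Lemma omV x y : om y x = (om x y)^-1.
Proof. by rewrite /om invgR. Qed.

Lemma om_xx x : om x x = 1.
Proof. by rewrite /om commgg. Qed.

Lemma om_cyc x i j : x \in A -> om (x ^+ i) (x ^+ j) = 1.
Proof. by move=> Ax; rewrite omXl ?groupX // omXr // om_xx !expg1n. Qed.

Lemma deep_adjE x y : deep_adj A f x y = [&& x \in A, y \in A, x != y & om x y == 1].
Proof.
rewrite /deep_adj; case Ax: (x \in A); case Ay: (y \in A) => //=.
case: (x != y) => //=.
have [Hx fx] := preP Ax; have [Hy fy] := preP Ay.
apply/idP/eqP.
  move/forall_inP => /(_ (pre x) Hx) /forall_inP /(_ (pre y) Hy).
  by rewrite fx fy !eqxx /= => /eqP cxy; rewrite /om; apply/eqP/commgP.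
move=> o1; apply/forall_inP => h Hh; apply/forall_inP => k Hk.
apply/implyP => /eqP fh; apply/implyP => /eqP fk; apply/eqP.
by apply/commgP; rewrite -(omE Hh Hk fh fk) o1.
Qed.

Definition inD x := [forall y in A, om x y == 1].

Lemma inDP x : reflect (forall y, y \in A -> om x y = 1) (inD x).
Proof. by apply: (iffP forall_inP) => h y Ay; apply/eqP; apply: h. Qed.

Lemma dominantE x : dominant A f x = (x \in A) && inD x.
Proof.
rewrite /dominant; case Ax: (x \in A) => //=.
apply/forall_inP/inDP => h y Ay.
  case: (eqVneq y x) => [-> | ne]; first exact: om_xx.
  by have := h y Ay; rewrite ne /= deep_adjE Ax Ay eq_sym ne /= => /eqP.
by apply/implyP => ne; rewrite deep_adjE Ax Ay eq_sym ne /= h.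
Qed.

Lemma nondomE x : nondominant A f x = (x \in A) && ~~ inD x.
Proof. by rewrite /nondominant dominantE; case: (x \in A). Qed.

Lemma radjE x y : reduced_adj A f x y =
  [&& nondominant A f x, nondominant A f y, x != y & om x y == 1].
Proof.
rewrite /reduced_adj deep_adjE !nondomE.
by case: (x \in A); case: (y \in A).
Qed.

Lemma radj_sym : symmetric (reduced_adj A f).
Proof.
move=> x y; rewrite !radjE [y == x]eq_sym (omV y x) invg_eq1.
by case: (nondominant A f x); case: (nondominant A f y).
Qed.

Lemma edge x y : nondominant A f x -> nondominant A f y -> om x y = 1 ->
  connect (reduced_adj A f) x y.
Proof.
move=> nx ny o1; case: (eqVneq x y) => [-> | ne]; first exact: connect0.
by apply: connect1; rewrite radjE nx ny ne o1 eqxx.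
Qed.

End Graph.

Section Conn.
Variables (aT gT : finGroupType) (A : {group aT}) (H : {group gT}) (f : {morphism H >-> aT}).
Hypotheses (cA : abelian A) (fH : f @* H = A) (kZ : 'ker f \subset 'Z(H)).
Variables (N : nat) (z w : aT).
Hypotheses (hN : forall a b, a \in A -> b \in A -> om f a b ^+ N = 1).
Hypotheses (Az : z \in A) (Aw : w \in A) (hzw : forall j, om f z w ^+ j = 1 -> N %| j).
Hypotheses (N_gt1 : 1 < N).

Local Notation e := (reduced_adj A f).
Local Notation nd := (nondominant A f).
Let omXl' := omXl cA fH kZ.
Let omXr' := omXr cA fH kZ.
Let omMl' := omMl cA fH kZ.
Let edge' := edge cA fH kZ.
Let nondomE' := nondomE cA fH kZ.

Lemma inDX a k : a \in A -> N %| k -> inD A f (a ^+ k).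
Proof.
move=> Aa /dvdnP[t ->]; apply/inDP => y Ay.
by rewrite omXl' // mulnC expgM hN // expg1n.
Qed.

Lemma nd_z k : ~~ (N %| k) -> nd (z ^+ k).
Proof.
move=> nk; rewrite nondomE' groupX //=; apply/inDP => /(_ w Aw).
by rewrite omXl' // => /hzw; rewrite (negbTE nk).
Qed.

Lemma edge_pow a k : nd a -> nd (a ^+ k) -> connect e a (a ^+ k).
Proof.
move=> na nak; apply: edge' => //.
move: na; rewrite nondomE' => /andP[Aa _].
by rewrite omXr' // om_xx expg1n.
Qed.

Lemma om_dvd a b k : a \in A -> b \in A -> N %| k -> om f a b ^+ k = 1.
Proof. by move=> Aa Ab /dvdnP[t ->]; rewrite mulnC expgM hN // expg1n. Qed.

Lemma conn_hub : ~~ prime N -> exists2 t0, nd t0 & forall a, nd a -> connect e a t0.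
Proof.
move=> npN.
set q := pdiv N.
have q_pr : prime q := pdiv_prime N_gt1.
have N_gt0 : 0 < N by apply: ltnW.
case: (eqVneq (N`_q)%N N) => [Nq | Nq].
-
  have eqN : N = (q ^ logn q N)%N by rewrite -p_part Nq.
  move: eqN; case eqr: (logn q N) => [|[|r]] eqN.
  + by move: N_gt1; rewrite eqN.
  + by rewrite eqN expn1 q_pr in npN.
  have q_gt1 : 1 < q := prime_gt1 q_pr.
  have ndiv : ~~ (N %| q ^ r.+1).
    apply/negP => /dvdn_leq; rewrite expn_gt0 ltnW //= => /(_ isT).
    by rewrite eqN leqNgt ltn_exp2l // ltnSn.
  exists (z ^+ (q ^ r.+1)); first exact: nd_z.
  move=> a na; have /andP[Aa nDa] : (a \in A) && ~~ inD A f a by rewrite -nondomE'.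
  have [s [nDs Ds]] : exists s, ~~ inD A f (a ^+ (q ^ s)) /\ inD A f (a ^+ (q ^ s.+1)).
    have : inD A f (a ^+ (q ^ r.+2)) by apply: inDX; rewrite // -eqN.
    elim: r.+2 => [|k IH]; first by rewrite expn0 expg1 (negbTE nDa).
    case D1: (inD A f (a ^+ (q ^ k))); first by move=> _; apply: IH.
    by move=> D2; exists k; rewrite D1.
  have Aas : a ^+ (q ^ s) \in A by apply: groupX.
  have nds : nd (a ^+ (q ^ s)) by rewrite nondomE' Aas.
  apply: connect_trans (edge_pow na nds) _.
  apply: edge' => //; first exact: nd_z.
  rewrite omXr' // expnS expgM -omXl' // -expgM -expnSr.
  by move/inDP: Ds => /(_ z Az) ->; rewrite expg1n.
-
  set a0 := (N`_q)%N; set b0 := (N`_q^')%N.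
  have defN : (a0 * b0)%N = N by rewrite partnC.
  have co : coprime a0 b0 := coprime_partC _ _ _.
  have a0_gt1 : 1 < a0 by rewrite p_part_gt1 pi_pdiv.
  have b0_gt1 : 1 < b0.
    rewrite ltn_neqAle part_gt0 andbT; apply/eqP => b01.
    by move: Nq; rewrite -[in X in _ != X]defN -b01 muln1 eqxx.
  set c := chinese a0 b0 1 0; set c' := chinese a0 b0 0 1.
  have ca : c = 1 %[mod a0] := chinese_modl co 1 0.
  have cb : c = 0 %[mod b0] := chinese_modr co 1 0.
  have c'a : c' = 0 %[mod a0] := chinese_modl co 0 1.
  have c'b : c' = 1 %[mod b0] := chinese_modr co 0 1.
  have F1 : ~~ (N %| c).
    apply/negP; rewrite -defN => /(dvdn_trans (dvdn_mulr b0 (dvdnn a0))).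
    by rewrite /dvdn ca modn_small.
  have F2 : ~~ (N %| c').
    apply/negP; rewrite -defN => /(dvdn_trans (dvdn_mull a0 (dvdnn b0))).
    by rewrite /dvdn c'b modn_small.
  have F3 : N %| c * c'.
    rewrite -defN Gauss_dvd //; apply/andP; split.
      by apply: dvdn_mull; rewrite /dvdn c'a mod0n.
    by apply: dvdn_mulr; rewrite /dvdn cb mod0n.
  have F4 : c + c' = 1 %[mod N].
    apply/eqP; rewrite -defN chinese_remainder //.
    apply/andP; split; apply/eqP; rewrite -modnDm.
      by rewrite ca c'a modnDm addn0.
    by rewrite cb c'b modnDm.
  have hub p : p \in A -> om f (p ^+ c) (z ^+ c') = 1 /\ om f (p ^+ c') (z ^+ c) = 1.
    move=> Ap; rewrite !omXl' ?groupX // !omXr' // -!expgM !om_dvd //.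
    by rewrite mulnC.
  have ndc := nd_z F1; have ndc' := nd_z F2.
  exists (z ^+ c) => // a na.
  have /andP[Aa nDa] : (a \in A) && ~~ inD A f a by rewrite -nondomE'.
  case Dc: (inD A f (a ^+ c)).
  + have nDc' : ~~ inD A f (a ^+ c').
      apply/negP => Dc'; move/negP: nDa; apply; apply/inDP => y Ay.
      rewrite -[om f a y]expg1 -(modn_small N_gt1) -F4 expg_mod; last exact: hN.
      rewrite expgD -!omXl' //.
      by move/inDP: Dc => -> //; move/inDP: Dc' => -> //; rewrite mulg1.
    have nda' : nd (a ^+ c') by rewrite nondomE' groupX.
    apply: connect_trans (edge_pow na nda') _.
    by apply: edge' => //; have [_ ->] := hub a Aa.
  have nda : nd (a ^+ c) by rewrite nondomE' groupX ?Dc.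
  apply: connect_trans (edge_pow na nda) _.
  apply: connect_trans (_ : connect e _ (z ^+ c')) _.
    by apply: edge' => //; have [-> _] := hub a Aa.
  by apply: edge' => //; rewrite (om_cyc cA fH kZ).
Qed.

End Conn.

Lemma om_1r (aT gT : finGroupType) (A : {group aT}) (H : {group gT}) (f : {morphism H >-> aT}) x :
  abelian A -> f @* H = A -> 'ker f \subset 'Z(H) -> x \in A -> om f x 1 = 1.
Proof.
move=> cA fH kZ Ax; rewrite -(expg0 x) (omXr cA fH kZ) //.
Qed.

Lemma dir1 (aT gT : finGroupType) (A : {group aT}) (H : {group gT}) (f : {morphism H >-> aT}) :
  abelian A -> ~~ cyclic A -> schur_cover A f -> reduced_disconnected A f ->
  exists (p : nat) (G K : {group aT}), [/\ prime p, cyclic G, p.-abelem K & G \x K = A].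
Proof.
move=> cA ncA sc [u [v [nu nv ncon]]].
have [[fH kf] _] := sc.
have kZ : 'ker f \subset 'Z(H) by move: kf; rewrite subsetI => /andP[].
have [B0 /(_ cA) [x1 ox1 defA]] := abelian_type_subproof A.
have [_ defA' _ _] := dprodP defA.
have sBA : B0 \subset A by rewrite -defA' mulG_subr.
have Ax1 : x1 \in A by rewrite -defA'; apply: (subsetP (mulG_subl _ _)); apply: cycle_id.
have cB : abelian B0 := abelianS sBA cA.
set N := exponent B0.
have ntB : ~~ (B0 :==: 1).
  apply/negP => /eqP B1; move: ncA; rewrite -defA B1 dprodg1 cycle_cyclic //.
have N_gt1 : 1 < N.
  rewrite ltn_neqAle exponent_gt0 andbT; apply/negP => /eqP N1.
  by move: ntB; rewrite trivg_exponent -/N -N1 dvdnn.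
have [w Bw oN] := exponent_witness (abelian_nil cB).
have Aw : w \in A := subsetP sBA w Bw.
have decA a : a \in A -> exists i, exists2 a', a' \in B0 & a = x1 ^+ i * a'.
  rewrite -defA' => /mulsgP[_ a' /cycleP[i ->] Ba' ->].
  by exists i, a'.
have hN a b : a \in A -> b \in A -> om f a b ^+ N = 1.
  move=> Aa Ab.
  have [i [a' Ba' ->]] := decA a Aa; have [j [b' Bb' ->]] := decA b Ab.
  have Aa' := subsetP sBA a' Ba'; have Ab' := subsetP sBA b' Bb'.
  rewrite -(omXl cA fH kZ) ?groupM ?groupX //.
  rewrite expgMn; last by apply: (centsP cA); rewrite ?groupX.
  rewrite (expg_exponent Ba') mulg1 -expgM.
  rewrite (omMr cA fH kZ) ?groupX // (om_cyc cA fH kZ) // mul1g.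
  rewrite expgM (omXl cA fH kZ) ?groupX // -(omXr cA fH kZ) ?groupX //.
  by rewrite (expg_exponent Bb') (om_1r cA fH kZ) ?groupX.
have hzw j : om f x1 w ^+ j = 1 -> N %| j.
  rewrite -(omXr cA fH kZ) // => o1.
  have Awj : w ^+ j \in A by rewrite groupX.
  have [Hx fx] := preP fH Ax1; have [Hw fw] := preP fH Awj.
  have := key cA sc defA Hx fx Hw; rewrite fw groupX // => /(_ isT o1).
  case/imsetP=> y By wj.
  rewrite /N oN order_dvdn wj -order_dvdn ox1.
  apply: dvdn_trans (exponentS sBA).
  by rewrite order_dvdn expg_exponent.
have nconn : ~~ prime N -> False.
  move=> npN.
  have [t0 _ ht] := conn_hub cA fH kZ hN Ax1 Aw hzw N_gt1 npN.
  move/negP: ncon; apply.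
  apply: connect_trans (ht u nu) _.
  by rewrite (sym_connect_sym (radj_sym cA fH kZ)); apply: ht.
have pN : prime N by apply/negPn/negP => /nconn.
exists N, <[x1]>%G, B0; split => //; first exact: cycle_cyclic.
by apply/abelemP => //; split => // y By; apply: expg_exponent.
Qed.

Lemma dir2 (aT gT : finGroupType) (A : {group aT}) (H : {group gT}) (f : {morphism H >-> aT}) :
  abelian A -> ~~ cyclic A -> schur_cover A f ->
  (exists (p : nat) (G K : {group aT}), [/\ prime p, cyclic G, p.-abelem K & G \x K = A]) ->
  reduced_disconnected A f.
Proof.
move=> cA ncA sc [p [G [K [pp cG abK defA]]]].
have [[fH kf] _] := sc.
have kZ : 'ker f \subset 'Z(H) by move: kf; rewrite subsetI => /andP[].
have [cK Kp] := elimT (abelemP pp) abK.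
have ntK : ~~ (K :==: 1).
  by apply/negP => /eqP K1; move: ncA; rewrite -defA K1 dprodg1 cG.
have [K' /(_ cK) [u ou defK]] := abelian_type_subproof K.
have eK : exponent K = p.
  have : exponent K %| p by apply/exponentP.
  case/primeP: pp => _ /(_ _ _) h /h /orP[/eqP e1 | /eqP //].
  by move: ntK; rewrite trivg_exponent e1 dvdnn.
have defA2 : <[u]> \x (G \x K') = A.
  by rewrite dprodA (dprodC <[u]>) -dprodA defK.
have defA2' := defA2; case/dprodP: defA2' => [[_ B _ defB] defAuB _ _].
rewrite defB in defA2 defAuB.
have sBA : B \subset A by rewrite -defAuB mulG_subr.
have Au : u \in A by rewrite -defAuB; apply: (subsetP (mulG_subl _ _)); apply: cycle_id.
have cB : abelian B := abelianS sBA cA.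
have [_ defGK _ _] := dprodP defA.
have sGA : G \subset A by rewrite -defGK mulG_subl.
have sKA : K \subset A by rewrite -defGK mulG_subr.
have D1 a y : a \in A -> y \in A -> om f (a ^+ p) y = 1.
  move=> Aa Ay; move: Aa Ay; rewrite -defGK.
  case/mulsgP=> g k Gg Kk -> /mulsgP[g' k' Gg' Kk' ->].
  have Ag := subsetP sGA g Gg; have Ak := subsetP sKA k Kk.
  have Ag' := subsetP sGA g' Gg'; have Ak' := subsetP sKA k' Kk'.
  rewrite expgMn; last by apply: (centsP cA).
  rewrite (Kp k Kk) mulg1 (omMr cA fH kZ) ?groupX //.
  have [c defG] := cyclicP cG.
  have Ac : c \in A by apply: (subsetP sGA); rewrite defG cycle_id.
  move: (Gg) (Gg'); rewrite defG => /cycleP[i ->] /cycleP[j ->].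
  rewrite -expgM (om_cyc cA fH kZ) // mul1g (omXl cA fH kZ) ?groupX //.
  by rewrite mulnC expgM -(omXr cA fH kZ) // (Kp k' Kk') (om_1r cA fH kZ) // expg1n.
have keyB b : b \in B -> om f u b = 1 -> b \in pw p B.
  move=> Bb o1; have Ab := subsetP sBA b Bb.
  have [Hu fu] := preP fH Au; have [Hb fb] := preP fH Ab.
  have := key cA sc defA2 Hu fu Hb; rewrite fb ou eK => /(_ Bb o1) //.
have [v Bv nv] : exists2 v, v \in B & v \notin pw p B.
  case: (boolP [exists x in B, x \notin pw p B]) => [/exists_inP // | nex].
  exfalso.
  have allpw : forall b, b \in B -> b \in pw p B.
    move=> b Bb; apply/negPn/negP => nb; move/negP: nex; apply.
    by apply/exists_inP; exists b.
  have pM : {in B &, {morph (fun y => y ^+ p) : a b / a * b}}.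
    by move=> a b Ba Bb /=; rewrite expgMn //; apply: (centsP cB).
  pose pm := Morphism pM.
  have im : pm @* B = B.
    apply/eqP; rewrite eqEsubset; apply/andP; split.
      by apply/subsetP=> _ /morphimP[y _ By ->]; rewrite /= groupX.
    by apply/subsetP=> b /allpw /imsetP[y By ->]; apply: mem_morphim.
  have k1 : #|'ker pm| = 1%N.
    have := card_ker_im pm; rewrite im -{1}(mul1n #|B|) => /eqP.
    by rewrite eqn_pmul2r ?cardG_gt0 // eq_sym => /eqP.
  have pinj y : y \in B -> y ^+ p = 1 -> y = 1.
    move=> By yp; have : y \in 'ker pm by apply/kerP.
    rewrite (card1_trivg k1).
    by move/set1P.
  have [_ defB' _ _] := dprodP defB.
  have [_ defK' _ _] := dprodP defK.
  have K'1 : K' :=: 1.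
    apply/trivgP; apply/subsetP=> k Kk; rewrite inE; apply/eqP/pinj.
      by rewrite -defB' (subsetP (mulG_subr _ _)).
    by apply: Kp; rewrite -defK' (subsetP (mulG_subr _ _)).
  rewrite K'1 dprodg1 in defK.
  have ndG : ~~ (p %| #|G|).
    apply/negP => /(Cauchy pp) [g Gg og].
    have g1 : g = 1 by apply: pinj; [rewrite -defB' (subsetP (mulG_subl _ _)) | rewrite -og expg_order].
    by move: og; rewrite g1 order1 => p1; move: pp; rewrite -p1.
  have defA3 : G \x <[u]> = A by rewrite defK.
  move: ncA; rewrite (cyclic_dprod defA3) ?cycle_cyclic //.
  by rewrite -orderE ou eK coprime_sym prime_coprime // ndG.
have Av := subsetP sBA v Bv.
have ouv : om f u v != 1.
  by apply/eqP => /(keyB v Bv); rewrite (negbTE nv).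
have nu : nondominant A f u.
  rewrite (nondomE cA fH kZ) Au /=; apply/negP => /inDP /(_ v Av) /eqP.
  by rewrite (negbTE ouv).
have nv' : nondominant A f v.
  rewrite (nondomE cA fH kZ) Av /=; apply/negP => /inDP /(_ u Au) /eqP.
  by rewrite omV invg_eq1 (negbTE ouv).
exists u, v; split => //.
set S := [pred a | (a \in A) && (om f u a == 1)].
have clos a b : reduced_adj A f a b -> a \in S -> b \in S.
  rewrite (radjE cA fH kZ) => /and4P[na nb _ /eqP oab] /andP[Aa /eqP oua].
  have /andP[Ab _] : (b \in A) && ~~ inD A f b by rewrite -(nondomE cA fH kZ).
  have : a \in <[u]> * B by rewrite defAuB.
  case/mulsgP=> _ b1 /cycleP[i ->] Bb1 ea.
  rewrite ea in oua oab na; move: oua oab.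
  have Ab1 := subsetP sBA b1 Bb1.
  rewrite (omMr cA fH kZ) ?groupX // -{1}(expg1 u) (om_cyc cA fH kZ) // mul1g => oub1.
  have [y By yb1] : exists2 y, y \in B & b1 = y ^+ p.
    by have /imsetP[y By ->] := keyB b1 Bb1 oub1; exists y.
  have Db1 : forall c, c \in A -> om f b1 c = 1.
    by move=> c Ac; rewrite yb1 D1 // (subsetP sBA).
  rewrite (omMl cA fH kZ) ?groupX // Db1 // mulg1 (omXl cA fH kZ) // => oubi.
  have npi : ~~ (p %| i).
    apply/negP => /dvdnP[t it]; move: na; rewrite it mulnC expgM.
    have -> : u ^+ p = 1 by rewrite -eK -ou expg_order.
    rewrite expg1n mul1g (nondomE cA fH kZ) => /andP[_ /inDP]; apply.
    exact: Db1.
  have oup : om f u b ^+ p = 1.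
    rewrite -(omXl cA fH kZ) //.
    have -> : u ^+ p = 1 by rewrite -eK -ou expg_order.
    by rewrite omV (om_1r cA fH kZ) // invg1.
  rewrite inE Ab /=; apply/eqP; apply/eqP; rewrite -order_eq1 -dvdn1.
  have cop : coprime p i by rewrite prime_coprime.
  rewrite -(eqnP cop) dvdn_gcd !order_dvdn oup oubi !eqxx.
  done.
have closedS : closed (reduced_adj A f) S.
  move=> a b eab; apply/idP/idP; first exact: clos.
  by apply: clos; rewrite (radj_sym cA fH kZ).
apply/negP => cuv; have := closed_connect closedS cuv.
by rewrite !inE Au Av om_xx eqxx /= (negbTE ouv).
Qed.


Unset Implicit Arguments.

Theorem corollary4p7 (aT : finGroupType) (A : {group aT})
    (gT : finGroupType) (H : {group gT}) (f : {morphism H >-> aT}) :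
  abelian A -> ~~ cyclic A -> schur_cover A f ->
  (reduced_disconnected A f <->
   exists (p : nat) (G K : {group aT}),
     [/\ prime p, cyclic G, p.-abelem K & G \x K = A]).
Proof.
move=> cA ncA sc; split; first exact: dir1.
exact: dir2.
Qed.
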